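(* There are no rotational $W$-translators in $\mathrm{SL}(2,\mathbb R)$ with constant mean curvature, where $W=\frac12(x^2-y^2)\partial_x+xy\partial_y$.
   Context: $\mathrm{SL}(2,\mathbb R)$ is given global coordinates $(x,y,\theta)\in\mathbb R\times(0,\infty)\times\mathbb R$ via $(x,y,\theta)\mapsto \begin{pmatrix}1&x\\0&1\end{pmatrix}\begin{pmatrix}\sqrt y&0\\0&1/\sqrt y\end{pmatrix}\begin{pmatrix}\cos\theta&\sin\theta\\-\sin\theta&\cos\theta\end{pmatrix}$, with the metric $\langle\,,\rangle=\frac{dx^2+dy^2}{4y^2}+\left(d\theta+\frac{dx}{2y}\right)^2$. Orthonormal frame: $e_1=2y\partial_x-\partial_\theta$, $e_2=2y\partial_y$, $e_3=\partial_\theta$; $W=\frac{1}{2y}\big(\frac12(x^2-y^2)e_1+xye_2+\frac12(x^2-y^2)e_3\big)$. A surface with unit normal $N$ and mean curvature $H$ (average of principal curvatures w.r.t. $N$) is a $W$-translator if $H=\langle N,W\rangle$. Rotational surfaces are those parametrized as $(s,t)\mapsto(x(s),y(s),t)$ with generating curve $(x(s),y(s))$; when $x'=2y\cos\varphi$, $y'=2y\sin\varphi$ (arclength parametrization in the hyperbolic plane $\frac{dx^2+dy^2}{4y^2}$), $N=-\sin\varphi\,e_1+\cos\varphi\,e_2$ and $H=\frac{\varphi'}{2}+\cos\varphi$. *)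

(* Defs.v *)
From Stdlib Require Import Reals.
Open Scope R_scope.

(* Components of vectors in the orthonormal frame (e1,e2,e3) of SL(2,R),
   e1 = 2y d_x - d_theta, e2 = 2y d_y, e3 = d_theta. *)
Record frame_vec := FV { c1 : R; c2 : R; c3 : R }.

(* Since the frame is orthonormal, the metric is the Euclidean product
   of frame components. *)
Definition inner (u v : frame_vec) : R := c1 u * c1 v + c2 u * c2 v + c3 u * c3 v.

Definition W_field (x y : R) : frame_vec :=
  FV (/(2*y) * (/2 * (x^2 - y^2))) (/(2*y) * (x*y)) (/(2*y) * (/2 * (x^2 - y^2))).

Definition N_rot (phi : R) : frame_vec := FV (- sin phi) (cos phi) 0.

Definition H_rot (phi dphi : R) : R := dphi / 2 + cos phi.

(* A rotational surface (s,t) |-> (x s, y s, t), s in the open interval (a,b),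
   with generating curve parametrized by hyperbolic arclength with angle phi
   (x' = 2y cos phi, y' = 2y sin phi, dphi = phi'), which is a W-translator:
   H = <N, W>. *)
Definition rotational_W_translator (a b : R) (x y phi dphi : R -> R) : Prop :=
  a < b /\
  forall s, a < s < b ->
    0 < y s /\
    derivable_pt_lim x s (2 * y s * cos (phi s)) /\
    derivable_pt_lim y s (2 * y s * sin (phi s)) /\
    derivable_pt_lim phi s (dphi s) /\
    H_rot (phi s) (dphi s) = inner (N_rot (phi s)) (W_field (x s) (y s)).

(* Main.v *)
Require Import Defs.
From Stdlib Require Import Reals Lra Psatz.
From Coquelicot Require Import Coquelicot.
Open Scope R_scope.

Lemma D_plus (f g : R -> R) x df dg : is_derive f x df -> is_derive g x dg ->
  is_derive (fun t => f t + g t) x (df + dg).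
Proof. intros; apply (is_derive_plus f g); auto. Qed.
Lemma D_minus (f g : R -> R) x df dg : is_derive f x df -> is_derive g x dg ->
  is_derive (fun t => f t - g t) x (df - dg).
Proof. intros; apply (is_derive_minus f g); auto. Qed.
Lemma D_mult (f g : R -> R) x df dg : is_derive f x df -> is_derive g x dg ->
  is_derive (fun t => f t * g t) x (df * g x + f x * dg).
Proof. intros; apply (is_derive_mult f g); auto. intros; apply Rmult_comm. Qed.
Lemma D_const (a x : R) : is_derive (fun _ => a) x 0.
Proof. apply (is_derive_const a x). Qed.
Lemma D_sin (f : R -> R) x df : is_derive f x df ->
  is_derive (fun t => sin (f t)) x (df * cos (f x)).
Proof. intros; apply (is_derive_comp sin f); auto. apply is_derive_sin. Qed.
Lemma D_cos (f : R -> R) x df : is_derive f x df ->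
  is_derive (fun t => cos (f t)) x (df * - sin (f x)).
Proof. intros; apply (is_derive_comp cos f); auto. apply is_derive_cos. Qed.
Lemma D_repl (f : R -> R) x l l' : is_derive f x l -> l = l' -> is_derive f x l'.
Proof. intros H ->; exact H. Qed.

Lemma deriv_zero_on (f : R -> R) a b s l : a < s < b ->
  (forall t, a < t < b -> f t = 0) -> is_derive f s l -> l = 0.
Proof.
  intros Hs Hf Hd.
  assert (Hd' : is_derive (fun _ => 0) s l).
  { apply (is_derive_ext_loc f); auto.
    assert (He : 0 < Rmin (s - a) (b - s)) by (apply Rmin_pos; lra).
    exists (mkposreal _ He). intros t Ht.
    unfold ball in Ht; simpl in Ht; unfold AbsRing_ball, abs, minus, plus, opp in Ht; simpl in Ht.
    apply Rabs_def2 in Ht. destruct Ht as [H1 H2].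
    pose proof (Rmin_l (s-a) (b-s)); pose proof (Rmin_r (s-a) (b-s)).
    apply Hf; lra. }
  apply is_derive_unique in Hd'. rewrite <- Hd'. apply Derive_const.
Qed.

Ltac D := repeat (match goal with
  | |- is_derive (fun t => _ + _) _ _ => apply D_plus
  | |- is_derive (fun t => _ - _) _ _ => apply D_minus
  | |- is_derive (fun t => _ * _) _ _ => apply D_mult
  | |- is_derive (fun t => sin _) _ _ => apply D_sin
  | |- is_derive (fun t => cos _) _ _ => apply D_cos
  | |- is_derive ?f _ _ => first [eassumption | apply D_const]
  end).

Lemma alg1 (x y S C c d : R) : S^2 + C^2 = 1 -> d = 2*(c - C) ->
  S*(x*x-y*y) - C*(2*(x*y)) + 4*c*y = 0 ->
  d*(C*(x*x-y*y) + S*(2*(x*y))) - 4*(y*y)*(S^2+C^2) + 8*c*y*S = 0 ->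
  c*(C*(x*x-y*y) + S*(2*(x*y))) - (x*x+y*y) = 0.
Proof.
  intros H1 Hd E0 E1. subst d.
  assert (Hx : S*(x*x-y*y) - C*(2*(x*y)) = -4*c*y) by lra.
  assert (Ha : 8*c*y*S = -2*S*(S*(x*x-y*y) - C*(2*(x*y)))) by (rewrite Hx; ring).
  rewrite Ha, H1 in E1.
  assert (Hi : C*(C*(x*x-y*y) + S*(2*(x*y))) + S*(S*(x*x-y*y) - C*(2*(x*y))) = (S^2+C^2)*(x*x-y*y)) by ring.
  rewrite H1 in Hi. lra.
Qed.

Lemma alg2 (x y S C c d : R) : S^2 + C^2 = 1 -> d = 2*(c - C) -> 0 < y ->
  S*(x*x-y*y) - C*(2*(x*y)) + 4*c*y = 0 ->
  c*(C*(x*x-y*y) + S*(2*(x*y))) - (x*x+y*y) = 0 ->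
  c*(d*(C*(2*(x*y)) - S*(x*x-y*y)) + 4*(x*y)*(S^2+C^2)) - 4*y*(x*C + y*S) = 0 ->
  False.
Proof.
  intros H1 Hd Hy E0 E1 E2. subst d.
  set (Q := C*(x*x-y*y) + S*(2*(x*y))) in *.
  set (r2 := x*x+y*y) in *.
  assert (Hr : 0 < r2) by (unfold r2; nra).
  assert (Hc : c <> 0) by (intro; subst c; lra).
  assert (E2' : c*c*(2*(c-C)) + c*x - x*C - y*S = 0).
  { assert (HH : C*(2*(x*y)) - S*(x*x-y*y) = 4*c*y) by lra.
    rewrite HH, H1 in E2.
    apply (Rmult_eq_reg_l (4*y)); [|lra]. lra. }
  assert (Hexpr : 4*c*c*y*(S*x - C*y) + r2*(c*x - x*C - y*S) = 0).
  { assert (HH : 4*c*y - (C*(2*(x*y)) - S*(x*x-y*y)) = 0) by lra.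
    assert (Hr2 : r2 - c*Q = 0) by lra.
    assert (Hs1 : 1 - (S^2+C^2) = 0) by lra.
    assert (Hid : 4*c*c*y*(S*x - C*y) + r2*(c*x - x*C - y*S) =
      c*(S*x-C*y)*(4*c*y - (C*(2*(x*y)) - S*(x*x-y*y))) + (r2 - c*Q)*(c*x-x*C-y*S)
      - c*x*(r2 - c*Q) + c*x*r2*(1 - (S^2+C^2))) by (unfold Q, r2; ring).
    rewrite Hid, HH, Hr2, Hs1. ring. }
  assert (Hk : r2*(c*c*(2*(c-C)) + c*x - x*C - y*S) = 2*c*c*(c*r2 - Q) + (4*c*c*y*(S*x - C*y) + r2*(c*x - x*C - y*S))).
  { unfold Q, r2. ring. }
  rewrite E2', Hexpr in Hk.
  assert (HQ : c*r2 - Q = 0).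
  { assert (2*c*c <> 0) by (apply Rmult_integral_contrapositive; split; [lra|auto]; apply Rmult_integral_contrapositive; split; auto; lra).
    apply (Rmult_eq_reg_l (2*c*c)); auto. lra. }
  assert (Hc2 : c*c = 1).
  { apply (Rmult_eq_reg_l r2); [|lra]. assert (c*Q = r2) by lra. 
    replace Q with (c*r2) in * by lra. lra. }
  assert (Hid : (S*(x*x-y*y) - C*(2*(x*y)))^2 + Q^2 = r2^2*(S^2+C^2)) by (unfold Q, r2; ring).
  rewrite H1 in Hid.
  assert (HQ2 : Q^2 = r2^2) by (replace Q with (c*r2) by lra; replace ((c*r2)^2) with ((c*c)*r2^2) by ring; rewrite Hc2; ring).
  assert (HP : S*(x*x-y*y) - C*(2*(x*y)) = -(4*c*y)) by lra.
  rewrite HP, HQ2 in Hid.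
  assert (16*(c*c)*(y*y) = 0) by nra.
  rewrite Hc2 in H. nra.
Qed.

Theorem mainTheorem6 :
  ~ (exists (a b : R) (x y phi dphi : R -> R) (c : R),
       rotational_W_translator a b x y phi dphi /\
       (forall s, a < s < b -> H_rot (phi s) (dphi s) = c)).
Proof.
  intros [a [b [x [y [phi [dphi [c [[Hab Hs] Hc]]]]]]]].
  assert (Hsin : forall s, sin (phi s) ^ 2 + cos (phi s) ^ 2 = 1).
  { intro s. rewrite <- (sin2_cos2 (phi s)). unfold Rsqr. ring. }
  assert (Hdp : forall s, a < s < b -> dphi s = 2*(c - cos (phi s))).
  { intros s Hs'. specialize (Hc s Hs'). unfold H_rot in Hc. lra. }
  assert (E0 : forall s, a < s < b ->
    sin (phi s)*(x s*x s-y s*y s) - cos (phi s)*(2*(x s*y s)) + 4*c*y s = 0).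
  { intros s Hs'. destruct (Hs s Hs') as [Hy [_ [_ [_ Heq]]]].
    rewrite (Hc s Hs') in Heq. unfold inner, N_rot, W_field in Heq; simpl in Heq.
    rewrite Heq. field. lra. }
  assert (Dx : forall s, a < s < b -> is_derive x s (2 * y s * cos (phi s)))
    by (intros s Hs'; apply is_derive_Reals; apply (Hs s Hs')).
  assert (Dy : forall s, a < s < b -> is_derive y s (2 * y s * sin (phi s)))
    by (intros s Hs'; apply is_derive_Reals; apply (Hs s Hs')).
  assert (Dp : forall s, a < s < b -> is_derive phi s (dphi s))
    by (intros s Hs'; apply is_derive_Reals; apply (Hs s Hs')).
  assert (E1 : forall s, a < s < b ->
    c*(cos (phi s)*(x s*x s-y s*y s) + sin (phi s)*(2*(x s*y s))) - (x s*x s+y s*y s) = 0).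
  { intros s Hs'.
    assert (HD : is_derive (fun t => sin (phi t)*(x t*x t-y t*y t) - cos (phi t)*(2*(x t*y t)) + 4*c*y t) s
       (dphi s*(cos (phi s)*(x s*x s-y s*y s) + sin (phi s)*(2*(x s*y s)))
        - 4*(y s*y s)*(sin (phi s)^2+cos (phi s)^2) + 8*c*y s*sin (phi s))).
    { eapply D_repl. 
      - pose proof (Dx s Hs'); pose proof (Dy s Hs'); pose proof (Dp s Hs'). D.
      - cbv beta; simpl; ring. }
    pose proof (deriv_zero_on _ a b s _ Hs' E0 HD) as HD0.
    eapply alg1; [apply Hsin | apply (Hdp s Hs') | apply (E0 s Hs') | exact HD0]. }
  set (s := (a+b)/2). assert (Hs' : a < s < b) by (unfold s; lra).
  assert (HD : is_derive (fun t => c*(cos (phi t)*(x t*x t-y t*y t) + sin (phi t)*(2*(x t*y t))) - (x t*x t+y t*y t)) s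
     (c*(dphi s*(cos (phi s)*(2*(x s*y s)) - sin (phi s)*(x s*x s-y s*y s)) + 4*(x s*y s)*(sin (phi s)^2+cos (phi s)^2))
      - 4*y s*(x s*cos (phi s) + y s*sin (phi s)))).
  { eapply D_repl.
    - pose proof (Dx s Hs'); pose proof (Dy s Hs'); pose proof (Dp s Hs'). D.
    - cbv beta; simpl; ring. }
  pose proof (deriv_zero_on _ a b s _ Hs' E1 HD) as HD0.
  destruct (Hs s Hs') as [Hy _].
  eapply alg2; [apply Hsin | apply (Hdp s Hs') | exact Hy | apply (E0 s Hs') | apply (E1 s Hs') | exact HD0].
Qed.
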